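(* Let $T,B,X$ be the unique formal power series in $t$ with $T=1+tT^3$, $B=tT^2$, $X=B(1+X+X^2)$, and let $T(u)$ be the unique formal power series in $t$ (coefficients polynomial in $u$) with $T(u)=1+tuT(u)^2T$. For $j\ge -2$ set $$H_j(u)=(1-X^{j+1})\,X\,T(u)-(1+X)(1-X^{j+2}).$$ Then for every integer $j\ge -1$, $$T_j(u)=T(u)\,\frac{H_j(u)}{H_{j-1}(u)}\cdot\frac{1-X^{j+2}}{1-X^{j+3}}.$$
   Context: A ternary tree is either empty or consists of a root together with three ternary trees (left, middle and right subtrees). Given an integer $j$, embed a ternary tree by giving the root abscissa $j$ and, for a node of abscissa $i$, giving its left child abscissa $i+1$, its middle child abscissa $i$ and its right child abscissa $i-1$. A $j$-positive tree is a ternary tree all of whose nodes have abscissa $\ge 0$ in this embedding (for $j=-1$ only the empty tree). The core of a nonempty ternary tree is the largest subtree containing the root in which every node is reached from the root using only left and middle edges (the core of the empty tree is empty). $T_j(u)=\sum_{\tau} t^{|\tau|}u^{c(\tau)}$, summed over all $j$-positive trees $\tau$, where $|\tau|$ is the number of nodes and $c(\tau)$ the number of core nodes. *)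

(* Defs.v *)
From HB Require Import structures.
From mathcomp Require Import all_boot all_order all_algebra.
Set Implicit Arguments. Unset Strict Implicit. Unset Printing Implicit Defensive.
Import Order.TTheory GRing.Theory Num.Theory.
Local Open Scope ring_scope.

(** Formal power series in t whose coefficients are polynomials in u
    (with integer coefficients): a series is its coefficient sequence. *)
Definition ps := nat -> {poly int}.

Definition ps_const (c : {poly int}) : ps := fun n => if n == 0%N then c else 0.
Definition ps_one : ps := ps_const 1.
Definition ps_t : ps := fun n => if n == 1%N then 1 else 0.
Definition ps_u : ps := ps_const 'X.
Definition ps_add (f g : ps) : ps := fun n => f n + g n.
Definition ps_opp (f : ps) : ps := fun n => - f n.
Definition ps_sub (f g : ps) : ps := ps_add f (ps_opp g).
Definition ps_mul (f g : ps) : ps :=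
  fun n => \sum_(i < n.+1) f i * g (n - i)%N.
Definition ps_exp (f : ps) (k : nat) : ps := iter k (ps_mul f) ps_one.

Fixpoint ps_inv_coefs (f : ps) (n : nat) : seq {poly int} :=
  match n with
  | 0 => [:: (f 0%N)^-1]
  | n'.+1 =>
      let s := ps_inv_coefs f n' in
      rcons s (- (f 0%N)^-1 * \sum_(i < n'.+1) f i.+1 * nth 0 s (n' - i)%N)
  end.
Definition ps_inv (f : ps) : ps := fun n => nth 0 (ps_inv_coefs f n) n.
Definition ps_div (f g : ps) : ps := ps_mul f (ps_inv g).

Declare Scope ps_scope.
Delimit Scope ps_scope with PS.
Notation "f + g" := (ps_add f g) : ps_scope.
Notation "f - g" := (ps_sub f g) : ps_scope.
Notation "f * g" := (ps_mul f g) : ps_scope.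
Notation "f / g" := (ps_div f g) : ps_scope.
Notation "f ^ k" := (ps_exp f k) : ps_scope.

(** Ternary trees (Leaf = empty tree). *)
Inductive ttree := Leaf | Node of ttree & ttree & ttree.

Fixpoint tsize (t : ttree) : nat :=
  match t with Leaf => 0%N | Node l m r => (tsize l + tsize m + tsize r).+1 end.

(** All nodes have abscissa >= 0, when the root has abscissa i;
    left child i+1, middle child i, right child i-1. *)
Fixpoint absc_pos (i : int) (t : ttree) : bool :=
  match t with
  | Leaf => true
  | Node l m r => [&& 0 <= i, absc_pos (i + 1) l, absc_pos i m & absc_pos (i - 1) r]
  end.
Definition jpositive (j : int) (t : ttree) : bool := absc_pos j t.

(** Number of core nodes: nodes reached from the root by left/middle edges only. *)
Fixpoint core_size (t : ttree) : nat :=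
  match t with Leaf => 0%N | Node l m _ => (core_size l + core_size m).+1 end.

(** All ternary trees of depth <= n, each listed exactly once.
    Every tree with n nodes has depth <= n. *)
Fixpoint trees_depth (n : nat) : seq ttree :=
  match n with
  | 0 => [:: Leaf]
  | n'.+1 => Leaf :: let s := trees_depth n' in
                flatten [seq [seq Node l m r | m <- s, r <- s] | l <- s]
  end.

Definition Tj (j : int) : ps :=
  fun n => \sum_(tau <- trees_depth n | (tsize tau == n) && jpositive j tau)
             'X^(core_size tau).

(** H_j(u) = (1 - X^(j+1)) X T(u) - (1+X)(1 - X^(j+2)), written (for j >= -2)
    as (X - X^(j+2)) T(u) - (1+X)(1 - X^(j+2)) so that only nonnegative powers occur. *)
Definition Hser (X Tu : ps) (j : int) : ps :=
  ((X - X ^ (absz (j + 2)%R)) * Tu - (ps_one + X) * (ps_one - X ^ (absz (j + 2)%R)))%PS.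

(* Main.v *)
Require Import Defs.
From HB Require Import structures.
From mathcomp Require Import all_boot all_order all_algebra.
From Stdlib Require Import FunctionalExtensionality Ring.
From mathcomp Require Import zify.
Import Order.TTheory GRing.Theory Num.Theory.
Import Defs.
Set Implicit Arguments. Unset Strict Implicit. Unset Printing Implicit Defensive.

Local Open Scope ring_scope.

Definition ps0 : ps := fun _ => 0.

Lemma ps_ext (f g : ps) : f =1 g -> f = g.
Proof. exact: functional_extensionality. Qed.

Lemma ps_mulE (f g : ps) n : ps_mul f g n = \sum_(i < n.+1) f i * g (n - i)%N.
Proof. by []. Qed.

Lemma ps_mul_rev (f g : ps) n :
  ps_mul f g n = \sum_(i < n.+1) f (n - i)%N * g i.
Proof.
rewrite /ps_mul (reindex_inj rev_ord_inj) /=.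
by apply: eq_bigr => j _; rewrite subSS subKn // -ltnS.
Qed.

Lemma ps_mulC (f g : ps) : ps_mul f g = ps_mul g f.
Proof.
apply: ps_ext => n; rewrite ps_mul_rev /ps_mul.
by apply: eq_bigr => j _; rewrite mulrC.
Qed.

Lemma ps_mulA (f g h : ps) : ps_mul f (ps_mul g h) = ps_mul (ps_mul f g) h.
Proof.
apply: ps_ext => i; rewrite [LHS]ps_mulE [RHS]ps_mul_rev.
pose coef3 j k := f j * (g (i - j - k)%N * h k).
transitivity (\sum_(j < i.+1) \sum_(k < i.+1 | (k <= i - j)%N) coef3 j k).
  apply: eq_bigr => /= j _; rewrite ps_mul_rev big_distrr /=.
  by rewrite (big_ord_narrow_leq (leq_subr _ _)).
rewrite (exchange_big_dep predT) //=; apply: eq_bigr => k _.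
transitivity (\sum_(j < i.+1 | (j <= i - k)%N) coef3 j k).
  apply: eq_bigl => j; rewrite -ltnS -(ltnS j) -!subSn ?leq_ord //.
  by rewrite -subn_gt0 -(subn_gt0 j) -!subnDA addnC.
rewrite (big_ord_narrow_leq (leq_subr _ _)) ps_mulE big_distrl /=.
by apply: eq_bigr => j _; rewrite /coef3 -!subnDA addnC mulrA.
Qed.

Lemma ps_mul1 (f : ps) : ps_mul ps_one f = f.
Proof.
apply: ps_ext => n; rewrite /ps_mul big_ord_recl subn0 /ps_one /ps_const /=.
by rewrite big1 ?addr0 ?mul1r // => j _ /=; rewrite mul0r.
Qed.

Lemma ps_mulDl (f g h : ps) : ps_mul (ps_add f g) h = ps_add (ps_mul f h) (ps_mul g h).
Proof.
apply: ps_ext => n; rewrite /ps_mul /ps_add -big_split /=.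
by apply: eq_bigr => j _; rewrite mulrDl.
Qed.

Definition ps_rt : ring_theory ps0 ps_one ps_add ps_mul ps_sub ps_opp (@eq ps).
Proof.
split.
- by move=> f; apply: ps_ext => n; rewrite /ps_add /ps0 add0r.
- by move=> f g; apply: ps_ext => n; rewrite /ps_add addrC.
- by move=> f g h; apply: ps_ext => n; rewrite /ps_add addrA.
- exact: ps_mul1.
- exact: ps_mulC.
- exact: ps_mulA.
- exact: ps_mulDl.
- by [].
- by move=> f; apply: ps_ext => n; rewrite /ps_add /ps_opp /ps0 addrN.
Qed.

Add Ring psring : ps_rt.




Lemma ps_mul0E (f g : ps) : ps_mul f g 0 = f 0%N * g 0%N.
Proof. by rewrite ps_mulE big_ord1. Qed.

Lemma ps_constE c (f : ps) n : ps_mul (ps_const c) f n = c * f n.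
Proof.
rewrite ps_mulE big_ord_recl subn0 /ps_const /=.
by rewrite big1 ?addr0 // => j _ /=; rewrite mul0r.
Qed.

Lemma ps_tE0 (f : ps) : ps_mul ps_t f 0 = 0.
Proof. rewrite ps_mul0E /ps_t /= mul0r; reflexivity. Qed.

Lemma ps_tES (f : ps) n : ps_mul ps_t f n.+1 = f n.
Proof.
rewrite ps_mulE big_ord_recl big_ord_recl /ps_t /= mul0r add0r mul1r subSS subn0.
by rewrite big1 ?addr0 // => j _ /=; rewrite mul0r.
Qed.

Lemma ps_mul_ext (f g f' g' : ps) n :
  (forall m, (m <= n)%N -> f m = f' m) -> (forall m, (m <= n)%N -> g m = g' m) ->
  ps_mul f g n = ps_mul f' g' n.
Proof.
move=> Hf Hg; rewrite !ps_mulE; apply: eq_bigr => i _.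
rewrite Hf; last by rewrite -ltnS. rewrite Hg; last exact: leq_subr. reflexivity.
Qed.

Lemma ps_inv_coefs_nth (f : ps) n k : (k <= n)%N -> nth 0 (ps_inv_coefs f n) k = ps_inv f k.
Proof.
have Hs : forall m, size (ps_inv_coefs f m) = m.+1.
  by elim=> [|m IH] //=; rewrite size_rcons IH.
elim: n k => [|n IH] k.
  rewrite leqn0 => /eqP ->; reflexivity.
rewrite leq_eqVlt => /orP [/eqP ->|]; first reflexivity.
rewrite ltnS => Hk /=; rewrite nth_rcons Hs ltnS Hk; exact: IH.
Qed.

Lemma ps_invS (f : ps) n :
  ps_inv f n.+1 = - (f 0%N)^-1 * \sum_(i < n.+1) f i.+1 * ps_inv f (n - i)%N.
Proof.
rewrite /ps_inv /= nth_rcons.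
have Hs : forall m, size (ps_inv_coefs f m) = m.+1.
  by elim=> [|m IH] //=; rewrite size_rcons IH.
rewrite Hs ltnn eqxx; congr (_ * _); apply: eq_bigr => i _.
by rewrite ps_inv_coefs_nth ?leq_subr.
Qed.

Lemma ps_mulV (f : ps) : f 0%N \is a GRing.unit -> ps_mul f (ps_inv f) = ps_one.
Proof.
move=> Hu; apply: ps_ext => n; case: n => [|n].
  by rewrite ps_mul0E /ps_inv /= mulrV.
rewrite ps_mulE big_ord_recl subn0 ps_invS mulrA mulrN mulrV // mulN1r.
rewrite /ps_one /ps_const /=.
have -> : \sum_(i < n.+1) f (bump 0 i) * ps_inv f (n.+1 - bump 0 i)%N =
          \sum_(i < n.+1) f i.+1 * ps_inv f (n - i)%N.
  by apply: eq_bigr => i _; rewrite /bump /= add1n subSS.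
by rewrite addNr.
Qed.

Fixpoint teqb (a b : ttree) : bool :=
  match a, b with
  | Leaf, Leaf => true
  | Node l m r, Node l' m' r' => [&& teqb l l', teqb m m' & teqb r r']
  | _, _ => false
  end.

Lemma teqP : Equality.axiom teqb.
Proof.
elim=> [|l IHl m IHm r IHr] [|l' m' r'] /=; try by constructor.
apply: (iffP idP) => [/and3P [/IHl -> /IHm -> /IHr ->] //|[<- <- <-]].
by apply/and3P; split; [exact/IHl|exact/IHm|exact/IHr].
Qed.

HB.instance Definition _ := hasDecEq.Build ttree teqP.

Fixpoint tdepth (t : ttree) : nat :=
  match t with Leaf => 0%N | Node l m r => (maxn (tdepth l) (maxn (tdepth m) (tdepth r))).+1 end.

Lemma tdepth_size t : (tdepth t <= tsize t)%N.
Proof.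
elim: t => [|l IHl m IHm r IHr] //=; rewrite ltnS !geq_max.
apply/and3P; split.
- by apply: leq_trans IHl _; rewrite -addnA leq_addr.
- by apply: leq_trans IHm _; rewrite addnAC leq_addl.
- by apply: leq_trans IHr _; rewrite leq_addl.
Qed.

Lemma mem_td d t : (t \in trees_depth d) = (tdepth t <= d)%N.
Proof.
elim: d t => [|d IH] [|l m r] //=.
rewrite in_cons /= ltnS !geq_max -!IH.
apply/flatten_mapP/and3P => [[x xs /allpairsP [[m' r'] /= [m's r's [-> -> ->]]]]|[ls ms rs]].
  by split.
by exists l => //; apply: allpairs_f.
Qed.

Lemma uniq_flatten_map (S T : eqType) (g : S -> seq T) (s : seq S) :
  uniq s -> (forall x, x \in s -> uniq (g x)) ->
  (forall x y z, z \in g x -> z \in g y -> x = y) -> uniq (flatten (map g s)).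
Proof.
elim: s => [|x s IH] //= /andP [xs us] ug hd.
rewrite cat_uniq ug ?mem_head //= IH // ?andbT; last by move=> y ys; apply: ug; rewrite in_cons ys orbT.
apply/hasPn => z /flatten_mapP [y ys zy]; apply/negP => zx.
by move: xs; rewrite (hd _ _ _ zx zy) ys.
Qed.

Lemma uniq_td d : uniq (trees_depth d).
Proof.
elim: d => [|d IH] //=.
apply/andP; split.
  by apply/negP => /flatten_mapP [x _ /allpairsP [p [_ _]]].
apply: uniq_flatten_map => //.
  move=> x _; apply: allpairs_uniq => //.
  by move=> [a b] [a' b'] _ _ /= [-> ->].
by move=> x y z /allpairsP [p [_ _ ->]] /allpairsP [q [_ _ []]].
Qed.

Lemma td_stable (P : pred ttree) (F : ttree -> {poly int}) n d : (n <= d)%N ->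
  \sum_(t <- trees_depth d | (tsize t == n) && P t) F t =
  \sum_(t <- trees_depth n | (tsize t == n) && P t) F t.
Proof.
move=> nd; rewrite -!(big_filter _ (fun t => (tsize t == n) && P t)).
apply: perm_big; apply: uniq_perm; rewrite ?filter_uniq ?uniq_td //.
move=> t; rewrite !mem_filter !mem_td.
case: (tsize t =P n) => //= sz; case: (P t) => //=.
have h1 : (tdepth t <= n)%N by rewrite -sz tdepth_size.
by rewrite h1 (leq_trans h1 nd).
Qed.



Lemma sum_ord_pick n (k : nat) (H : nat -> {poly int}) :
  \sum_(i < n.+1) (if k == i :> nat then H i else 0) = if (k <= n)%N then H k else 0.
Proof.
case: leqP => hk.
  rewrite (bigD1 (Ordinal (hk : (k < n.+1)%N))) //= eqxx big1 ?addr0 //.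
  move=> i hi; case: eqP => // ki; move: hi; rewrite -ki.
  by case/eqP; apply: val_inj.
by rewrite big1 // => i _; case: eqP => // ki; move: (ltn_ord i); rewrite -ki; lia.
Qed.

Lemma conv2 (I J : Type) (s1 : seq I) (s2 : seq J) (sz1 : I -> nat) (sz2 : J -> nat)
  (f : I -> {poly int}) (g : J -> {poly int}) n :
  \sum_(x <- s1) \sum_(y <- s2 | (sz1 x + sz2 y == n)%N) f x * g y =
  \sum_(i < n.+1) (\sum_(x <- s1 | sz1 x == i) f x) * (\sum_(y <- s2 | sz2 y == (n - i)%N) g y).
Proof.
symmetry.
transitivity (\sum_(i < n.+1) \sum_(x <- s1)
   (if sz1 x == i then f x * \sum_(y <- s2 | sz2 y == (n - i)%N) g y else 0)).
  apply: eq_bigr => i _; rewrite big_distrl /= big_mkcond /=; reflexivity.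
rewrite exchange_big /=; apply: eq_bigr => x _.
have := sum_ord_pick n (sz1 x) (fun i => f x * \sum_(y <- s2 | sz2 y == (n - i)%N) g y).
move=> /= ->.
case: leqP => h.
  rewrite big_distrr /=; apply: eq_bigl => y.
  by apply/idP/idP => /eqP E; apply/eqP; lia.
rewrite big_pred0; first reflexivity.
by move=> y; apply/eqP; lia.
Qed.

Definition gfw (w : ttree -> {poly int}) (j : int) : ps :=
  fun n => \sum_(t <- trees_depth n | (tsize t == n) && jpositive j t) w t.

Lemma gfw0 w j : gfw w j 0 = w Leaf.
Proof. by rewrite /gfw /= big_cons big_nil /= addr0. Qed.

Lemma gfw_neg w n : gfw w (-1) n.+1 = 0.
Proof.
rewrite /gfw big_pred0; first reflexivity.
by case=> [|l m r] //=; rewrite andbF.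
Qed.

Lemma gfw_st w j n a : (a <= n)%N ->
  \sum_(l <- trees_depth n | tsize l == a) (if jpositive j l then w l else 0) = gfw w j a.
Proof. by move=> h; rewrite -big_mkcondr; exact: td_stable. Qed.


Lemma gfw_rec (w w1 w2 w3 : ttree -> {poly int}) (c : {poly int}) (j : int) n :
  (0 <= j) -> (forall l m r, w (Node l m r) = c * (w1 l * w2 m * w3 r)) ->
  gfw w j n.+1 = c * ps_mul (ps_mul (gfw w1 (j + 1)) (gfw w2 j)) (gfw w3 (j - 1)) n.
Proof.
move=> hj hw.
pose s := trees_depth n.
pose f1 l := if jpositive (j + 1) l then w1 l else 0.
pose f2 l := if jpositive j l then w2 l else 0.
pose f3 l := if jpositive (j - 1) l then w3 l else 0.
transitivity (c * \sum_(l <- s) \sum_(m <- s)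
    \sum_(r <- s | (tsize l + tsize m + tsize r == n)%N) (f1 l * f2 m * f3 r)).
  rewrite /gfw big_mkcond /= big_cons /= add0r big_flatten big_map big_distrr.
  apply: eq_bigr => l _; rewrite big_allpairs_dep big_distrr.
  apply: eq_bigr => m _; rewrite [in RHS]big_mkcond big_distrr.
  apply: eq_bigr => r _ /=.
  rewrite eqSS /jpositive /= hj /f1 /f2 /f3 /jpositive hw.
  case: (_ == n); case: absc_pos; case: absc_pos; case: absc_pos;
    rewrite /= ?(mulr0, mul0r); reflexivity.
congr (c * _).
rewrite ps_mulE.
transitivity (\sum_(p <- [seq (l, m) | l <- s, m <- s])
   \sum_(r <- s | (tsize p.1 + tsize p.2 + tsize r == n)%N) (f1 p.1 * f2 p.2 * f3 r)).
  by rewrite big_allpairs.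
rewrite (conv2 _ _ (fun p => (tsize p.1 + tsize p.2)%N) (@tsize)
                (fun p => f1 p.1 * f2 p.2) f3).
apply: eq_bigr => i _.
rewrite gfw_st ?leq_subr //; congr (_ * _).
rewrite big_mkcond big_allpairs /=.
transitivity (\sum_(l <- s) \sum_(m <- s | (tsize l + tsize m == i)%N) f1 l * f2 m).
  by apply: eq_bigr => l _; rewrite [in RHS]big_mkcond.
rewrite conv2 ps_mulE; apply: eq_bigr => a _.
have hi : (i <= n)%N by rewrite -ltnS.
rewrite gfw_st; last by apply: leq_trans hi; rewrite -ltnS.
rewrite gfw_st //; apply: leq_trans hi; exact: leq_subr.
Qed.

Section Alg.
Local Open Scope ps_scope.

Lemma mulcancel (a b D iD : ps) : D * iD = ps_one -> a * D = b * D -> a = b.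
Proof.
move=> h e.
transitivity (a * (D * iD)); first by rewrite h; ring.
transitivity ((a * D) * iD); first ring.
rewrite e; transitivity (b * (D * iD)); first ring.
rewrite h; ring.
Qed.

Definition gg (x Tu p : ps) := (x - p) * Tu - (ps_one + x) * (ps_one - p).
Definition ee (p : ps) := ps_one - p.

Lemma algU (x c Tu T t u i1 i2 i3 i4 i5 : ps) :
  gg x Tu (x*c) * i1 = ps_one ->
  gg x Tu (x*(x*c)) * i2 = ps_one ->
  ee (x*(x*(x*c))) * i3 = ps_one ->
  ee (x*(x*(x*(x*c)))) * i4 = ps_one ->
  (ee (x*(x*(x*c))) * ee (x*(x*c))) * i5 = ps_one ->
  t*u*(Tu*Tu)*T = Tu - ps_one ->
  Tu * (gg x Tu (x*(x*c)) * i1) * (ee (x*(x*c)) * i3)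
  = ps_one + t * (u * ((Tu * (gg x Tu (x*(x*(x*c))) * i2) * (ee (x*(x*(x*c))) * i4))
                     * (Tu * (gg x Tu (x*(x*c)) * i1) * (ee (x*(x*c)) * i3))
                     * (T * ((ee (x*(x*(x*(x*c)))) * ee (x*c)) * i5)))).
Proof.
move=> h1 h2 h3 h4 h5 hU.
apply: (@mulcancel _ _ (gg x Tu (x*c) * ee (x*(x*(x*c)))) (i1 * i3)).
  transitivity ((gg x Tu (x * c) * i1) * (ee (x * (x * (x * c))) * i3)); first ring.
  by rewrite h1 h3; ring.
transitivity (Tu * gg x Tu (x*(x*c)) * ee (x*(x*c)) *
   ((gg x Tu (x*c) * i1) * (ee (x*(x*(x*c))) * i3))); first ring.
rewrite h1 h3.
symmetry.
transitivity (gg x Tu (x*c) * ee (x*(x*(x*c))) + (t*u*(Tu*Tu)*T) *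
   (gg x Tu (x*(x*(x*c))) * ee (x*c)) *
   ((gg x Tu (x*(x*c)) * i2) * (ee (x*(x*(x*(x*c)))) * i4) *
   ((ee (x*(x*(x*c))) * ee (x*(x*c))) * i5) * ((gg x Tu (x*c) * i1) * (ee (x*(x*(x*c))) * i3)))).
  ring.
rewrite h1 h2 h3 h4 h5 hU /gg /ee; ring.
Qed.

Lemma algS (x c T t j0 j1 j2 : ps) :
  (ee (x*(x*(x*(x*c)))) * ee (x*(x*(x*c)))) * j1 = ps_one ->
  (ee (x*(x*(x*(x*(x*c))))) * ee (x*(x*(x*(x*c))))) * j2 = ps_one ->
  (ee (x*(x*(x*c))) * ee (x*(x*c))) * j0 = ps_one ->
  t*(T*(T*T)) = T - ps_one ->
  T * (ps_one + x * x) = ps_one + x + x * x ->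
  T * ((ee (x*(x*(x*(x*(x*c))))) * ee (x*(x*c))) * j1)
  = ps_one + t * ((T * ((ee (x*(x*(x*(x*(x*(x*c)))))) * ee (x*(x*(x*c)))) * j2))
                 * (T * ((ee (x*(x*(x*(x*(x*c))))) * ee (x*(x*c))) * j1))
                 * (T * ((ee (x*(x*(x*(x*c)))) * ee (x*c)) * j0))).
Proof.
move=> h1 h2 h0 hT hX.
apply: (@mulcancel _ _ (ee (x*(x*(x*(x*c)))) * ee (x*(x*(x*c)))) j1 h1).
transitivity (T * (ee (x*(x*(x*(x*(x*c))))) * ee (x*(x*c))) *
   ((ee (x*(x*(x*(x*c)))) * ee (x*(x*(x*c)))) * j1)); first ring.
rewrite h1; symmetry.
transitivity (ee (x*(x*(x*(x*c)))) * ee (x*(x*(x*c))) + (t*(T*(T*T))) *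
   (ee (x*(x*(x*(x*(x*(x*c)))))) * ee (x*c)) *
   (((ee (x*(x*(x*(x*(x*c))))) * ee (x*(x*(x*(x*c))))) * j2) *
    ((ee (x*(x*(x*c))) * ee (x*(x*c))) * j0) *
    ((ee (x*(x*(x*(x*c)))) * ee (x*(x*(x*c)))) * j1))).
  ring.
rewrite h1 h2 h0 hT /ee.
transitivity (T * (ps_one - x * (x * (x * (x * (x * c))))) * (ps_one - x * (x * c))
  - x*c*(ps_one - x)*(ps_one - x*x)*(T * (ps_one + x * x) - (ps_one + x + x * x))).
  ring.
rewrite hX; ring.
Qed.


Lemma algC0 (x Tu i1 i2 : ps) :
  gg x Tu ps_one * i1 = ps_one -> ee (x*(x*ps_one)) * i2 = ps_one ->
  Tu * (gg x Tu (x*ps_one) * i1) * (ee (x*ps_one) * i2) = ps_one.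
Proof.
move=> h1 h2.
apply: (@mulcancel _ _ (gg x Tu ps_one * ee (x*(x*ps_one))) (i1 * i2)).
  transitivity ((gg x Tu ps_one * i1) * (ee (x*(x*ps_one)) * i2)); first ring.
  by rewrite h1 h2; ring.
transitivity (Tu * gg x Tu (x*ps_one) * ee (x*ps_one) *
   ((gg x Tu ps_one * i1) * (ee (x*(x*ps_one)) * i2))); first ring.
rewrite h1 h2 /gg /ee; ring.
Qed.

Lemma algS0 (x T i : ps) :
  (ee (x*(x*(x*ps_one))) * ee (x*(x*ps_one))) * i = ps_one ->
  T * (ps_one + x * x) = ps_one + x + x * x ->
  T * ((ee (x*(x*(x*(x*ps_one)))) * ee (x*ps_one)) * i) = ps_one.
Proof.
move=> h hX.
apply: (@mulcancel _ _ (ee (x*(x*(x*ps_one))) * ee (x*(x*ps_one))) i h).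
transitivity (T * (ee (x*(x*(x*(x*ps_one)))) * ee (x*ps_one)) *
  ((ee (x*(x*(x*ps_one))) * ee (x*(x*ps_one))) * i)); first ring.
rewrite h /ee.
transitivity (ps_one * ((ps_one - x*(x*(x*ps_one))) * (ps_one - x*(x*ps_one))) +
  (ps_one - x)*(ps_one - x*x)*(T * (ps_one + x * x) - (ps_one + x + x * x))).
  ring.
rewrite hX; ring.
Qed.

Lemma uniq_gen (A A' F F' : nat -> ps) :
  A 0%N = ps_one -> A' 0%N = ps_one ->
  (forall k, A k.+1 = ps_one + ps_t * F k) ->
  (forall k, A' k.+1 = ps_one + ps_t * F' k) ->
  (forall n, (forall k m, (m <= n)%N -> A k m = A' k m) -> forall k, F k n = F' k n) ->
  forall k, A k = A' k.
Proof.
move=> h0 h0' hA hA' hF.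
suff H : forall n k m, (m <= n)%N -> A k m = A' k m.
  by move=> k; apply: ps_ext => m; exact: (H m).
elim=> [|n IH] k m.
  rewrite leqn0 => /eqP ->.
  case: k => [|k]; first by rewrite h0 h0'.
  rewrite hA hA' /ps_add !ps_tE0; reflexivity.
rewrite leq_eqVlt => /orP [/eqP ->|]; last by rewrite ltnS; exact: IH.
case: k => [|k]; first by rewrite h0 h0'.
rewrite hA hA' /ps_add !ps_tES (hF n IH k); reflexivity.
Qed.

End Alg.

Section Main.
Local Open Scope ps_scope.

Definition jj (k : nat) : int := (k%:Z - 1)%R.
Definition Cand (X Tu : ps) (k : nat) : ps :=
  Tu * (gg X Tu (X ^ k.+1) * ps_inv (gg X Tu (X ^ k))) * (ee (X ^ k.+1) * ps_inv (ee (X ^ k.+2))).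
Definition Scand (X T : ps) (k : nat) : ps :=
  T * ((ee (X ^ k.+4) * ee (X ^ k.+1)) * ps_inv (ee (X ^ k.+3) * ee (X ^ k.+2))).

Lemma ps_expS (f : ps) n : f ^ n.+1 = f * f ^ n.
Proof. reflexivity. Qed.

Lemma ps_exp0 (f : ps) : f ^ 0 = ps_one.
Proof. reflexivity. Qed.

Lemma mul0_0 (f g : ps) : f 0%N = 0%R -> (f * g) 0%N = 0%R.
Proof. by move=> h; rewrite ps_mul0E h mul0r. Qed.

Lemma gg_inv X Tu q : X 0%N = 0%R -> Tu 0%N = 1%R -> q 0%N = 0%R ->
  gg X Tu q * ps_inv (gg X Tu q) = ps_one.
Proof.
move=> hX hT hq; apply: ps_mulV.
rewrite /gg /ps_sub /ps_add /ps_opp !ps_mul0E hX hT hq /ps_one /ps_const /=.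
rewrite !(oppr0, addr0, add0r, mul0r, mul1r, mulr1); exact: unitrN1.
Qed.

Lemma gg1_inv X Tu : X 0%N = 0%R -> Tu 0%N = 1%R ->
  gg X Tu ps_one * ps_inv (gg X Tu ps_one) = ps_one.
Proof.
move=> hX hT; apply: ps_mulV.
rewrite /gg /ps_sub /ps_add /ps_opp !ps_mul0E hX hT /ps_one /ps_const /=.
rewrite !(subrr, oppr0, addr0, add0r, mul0r, mul1r, mulr1, mulr0); exact: unitrN1.
Qed.

Lemma ee_inv q : q 0%N = 0%R -> ee q * ps_inv (ee q) = ps_one.
Proof.
move=> hq; apply: ps_mulV.
rewrite /ee /ps_sub /ps_add /ps_opp hq /ps_one /ps_const /= oppr0 addr0; exact: unitr1.
Qed.

Lemma ee2_inv q q' : q 0%N = 0%R -> q' 0%N = 0%R ->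
  (ee q * ee q') * ps_inv (ee q * ee q') = ps_one.
Proof.
move=> hq hq'; apply: ps_mulV.
rewrite ps_mul0E /ee /ps_sub /ps_add /ps_opp hq hq' /ps_one /ps_const /= oppr0 addr0 mulr1.
exact: unitr1.
Qed.

Lemma Cand_rec X T Tu k : X 0%N = 0%R -> Tu 0%N = 1%R ->
  ps_t * ps_u * (Tu * Tu) * T = Tu - ps_one ->
  Cand X Tu k.+1 = ps_one + ps_t * (ps_u * (Cand X Tu k.+2 * Cand X Tu k.+1 * Scand X T k)).
Proof.
move=> hX hT hU; rewrite /Cand /Scand !ps_expS.
apply: algU => //.
- by apply: gg_inv => //; apply: mul0_0.
- by apply: gg_inv => //; apply: mul0_0.
- by apply: ee_inv; apply: mul0_0.
- by apply: ee_inv; apply: mul0_0.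
- by apply: ee2_inv; apply: mul0_0.
Qed.

Lemma Scand_rec X T k : X 0%N = 0%R ->
  ps_t * (T * (T * T)) = T - ps_one ->
  T * (ps_one + X * X) = ps_one + X + X * X ->
  Scand X T k.+1 = ps_one + ps_t * (Scand X T k.+2 * Scand X T k.+1 * Scand X T k).
Proof.
move=> hX hT hTx; rewrite /Scand !ps_expS.
apply: algS => //; by apply: ee2_inv; apply: mul0_0.
Qed.

Lemma Cand0 X Tu : X 0%N = 0%R -> Tu 0%N = 1%R -> Cand X Tu 0 = ps_one.
Proof.
move=> hX hT; rewrite /Cand !ps_expS ps_exp0.
apply: algC0; first exact: gg1_inv.
by apply: ee_inv; apply: mul0_0.
Qed.

Lemma Scand0 X T : X 0%N = 0%R ->
  T * (ps_one + X * X) = ps_one + X + X * X -> Scand X T 0 = ps_one.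
Proof.
move=> hX hTx; rewrite /Scand !ps_expS ps_exp0.
apply: algS0 => //; by apply: ee2_inv; apply: mul0_0.
Qed.

End Main.

Lemma jj0 : jj 0 = (-1)%R.
Proof. rewrite /jj; lia. Qed.
Lemma jjS1 k : (jj k.+1 + 1)%R = jj k.+2.
Proof. rewrite /jj; lia. Qed.
Lemma jjS2 k : (jj k.+1 - 1)%R = jj k.
Proof. rewrite /jj; lia. Qed.
Lemma jj_ge k : (0 <= jj k.+1)%R.
Proof. rewrite /jj; lia. Qed.

Definition Sfam (k : nat) : ps := gfw (fun _ => 1%R) (jj k).
Definition Afam (k : nat) : ps := Tj (jj k).

Lemma fam0 w : w Leaf = 1%R -> gfw w (jj 0) = ps_one.
Proof.
move=> h; apply: ps_ext => [[|n]]; first by rewrite gfw0 h.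
rewrite jj0 gfw_neg; reflexivity.
Qed.

Lemma Sfam_rec k : Sfam k.+1 = (ps_one + ps_t * (Sfam k.+2 * Sfam k.+1 * Sfam k))%PS.
Proof.
apply: ps_ext => [[|n]].
  rewrite /ps_add ps_tE0 /Sfam gfw0 /ps_one /ps_const /= addr0; reflexivity.
rewrite /ps_add ps_tES /Sfam.
rewrite (@gfw_rec _ (fun _ => 1%R) (fun _ => 1%R) (fun _ => 1%R) 1%R _ _ (jj_ge k)); last first.
  by move=> *; rewrite !mul1r.
rewrite /ps_one /ps_const /= add0r mul1r jjS1 jjS2; reflexivity.
Qed.

Lemma Afam_rec k :
  Afam k.+1 = (ps_one + ps_t * (ps_u * (Afam k.+2 * Afam k.+1 * Sfam k)))%PS.
Proof.
apply: ps_ext => [[|n]].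
  rewrite /ps_add ps_tE0 /Afam (_ : Tj (jj k.+1) 0 = gfw (fun t => 'X^(core_size t)) (jj k.+1) 0) //.
  rewrite gfw0 /ps_one /ps_const /= addr0 expr0; reflexivity.
rewrite /ps_add ps_tES /Afam /ps_u ps_constE.
rewrite (_ : Tj (jj k.+1) n.+1 = gfw (fun t => 'X^(core_size t)) (jj k.+1) n.+1) //.
rewrite (@gfw_rec _ (fun t => 'X^(core_size t)) (fun t => 'X^(core_size t)) (fun _ => 1%R) 'X _ _ (jj_ge k)); last first.
  by move=> l m r /=; rewrite exprS exprD mulr1.
rewrite /ps_one /ps_const /= add0r jjS1 jjS2; reflexivity.
Qed.

Lemma S_eq X T k : X 0%N = 0%R ->
  (ps_t * (T * (T * T)) = T - ps_one)%PS ->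
  (T * (ps_one + X * X) = ps_one + X + X * X)%PS ->
  Sfam k = Scand X T k.
Proof.
move=> hX hT hTx.
apply: (@uniq_gen Sfam (Scand X T) (fun k => Sfam k.+2 * Sfam k.+1 * Sfam k)%PS
          (fun k => Scand X T k.+2 * Scand X T k.+1 * Scand X T k)%PS).
- exact: fam0.
- exact: Scand0.
- exact: Sfam_rec.
- by move=> k'; apply: Scand_rec.
- move=> n IH k'; apply: ps_mul_ext => m hm; last exact: IH.
  by apply: ps_mul_ext => m' hm'; apply: IH; apply: leq_trans hm.
Qed.

Lemma A_eq X T Tu k : X 0%N = 0%R -> Tu 0%N = 1%R ->
  (ps_t * (T * (T * T)) = T - ps_one)%PS ->
  (T * (ps_one + X * X) = ps_one + X + X * X)%PS ->
  (ps_t * ps_u * (Tu * Tu) * T = Tu - ps_one)%PS ->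
  Afam k = Cand X Tu k.
Proof.
move=> hX hTu hT hTx hU.
apply: (@uniq_gen Afam (Cand X Tu) (fun k => ps_u * (Afam k.+2 * Afam k.+1 * Scand X T k))%PS
          (fun k => ps_u * (Cand X Tu k.+2 * Cand X Tu k.+1 * Scand X T k))%PS).
- have -> : Afam 0 = gfw (fun t => 'X^(core_size t)) (jj 0) by [].
  exact: fam0.
- exact: Cand0.
- by move=> k'; rewrite {1}Afam_rec (S_eq k' hX hT hTx); reflexivity.
- by move=> k'; apply: Cand_rec.
- move=> n IH k'; apply: ps_mul_ext => m hm //.
  apply: ps_mul_ext => m1 hm1 //.
  by apply: ps_mul_ext => m' hm'; apply: IH; apply: leq_trans hm; apply: leq_trans hm1.
Qed.

Local Close Scope ring_scope.

Theorem theorem10 (T B X Tu : ps) :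
  T =1 (ps_one + ps_t * T ^ 3)%PS ->
  B =1 (ps_t * T ^ 2)%PS ->
  X =1 (B * (ps_one + X + X ^ 2))%PS ->
  Tu =1 (ps_one + ps_t * ps_u * Tu ^ 2 * T)%PS ->
  forall j : int, (-1 <= j)%R ->
    Tj j =1 (Tu * (Hser X Tu j / Hser X Tu (j - 1)%R)
             * ((ps_one - X ^ (absz (j + 2)%R)) / (ps_one - X ^ (absz (j + 3)%R))))%PS.
Proof.
move=> hT hB hX hU j hj.
have hT1 : T = (ps_one + ps_t * (T * (T * (T * ps_one))))%PS := ps_ext hT.
have hB1 : B = (ps_t * (T * (T * ps_one)))%PS := ps_ext hB.
have hX1 : X = (B * (ps_one + X + X * (X * ps_one)))%PS := ps_ext hX.
have hU1 : Tu = (ps_one + ps_t * ps_u * (Tu * (Tu * ps_one)) * T)%PS := ps_ext hU.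
have B0 : B 0%N = 0%R by rewrite hB1 ps_tE0.
have X0 : X 0%N = 0%R by rewrite hX1 ps_mul0E B0 mul0r.
have Tu0 : Tu 0%N = 1%R.
  rewrite hU1 /ps_add !ps_mul0E /ps_t /= !mul0r addr0; reflexivity.
have hT3 : (ps_t * (T * (T * T)) = T - ps_one)%PS.
  transitivity ((ps_one + ps_t * (T * (T * (T * ps_one)))) - ps_one)%PS; first ring.
  rewrite -hT1; reflexivity.
have hTB : T = (ps_one + B * T)%PS.
  transitivity (ps_one + ps_t * (T * (T * (T * ps_one))))%PS; first exact: hT1.
  rewrite hB1; ring.
have hTx : (T * (ps_one + X * X) = ps_one + X + X * X)%PS.
  have e : (B * (ps_one + X + X * X))%PS = X.
    transitivity (B * (ps_one + X + X * (X * ps_one)))%PS; first ring.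
    rewrite -hX1; reflexivity.
  transitivity ((ps_one + B * T) * (ps_one + X + X * X) - T * (B * (ps_one + X + X * X)))%PS.
    rewrite e -hTB; ring.
  ring.
have hUr : (ps_t * ps_u * (Tu * Tu) * T = Tu - ps_one)%PS.
  transitivity ((ps_one + ps_t * ps_u * (Tu * (Tu * ps_one)) * T) - ps_one)%PS; first ring.
  rewrite -hU1; reflexivity.
have [k ej] : exists k, j = jj k by exists (absz (j + 1)%R); rewrite /jj; lia.
subst j.
have a1 : absz (jj k - 1 + 2)%R = k by rewrite /jj; lia.
have a2 : absz (jj k + 2)%R = k.+1 by rewrite /jj; lia.
have a3 : absz (jj k + 3)%R = k.+2 by rewrite /jj; lia.
have -> : Tj (jj k) = Afam k by [].
rewrite (A_eq k X0 Tu0 hT3 hTx hUr) /Hser a1 a2 a3.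
move=> n; reflexivity.
Qed.
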